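(* Let $A$ be a unital $C^*$-algebra and let $a,b\in A$ be unitary. Then $a=b$ if and only if $\rho(a,b)=0$.
   Context: For $a,b\in A$ and $n\geq 0$ put $C_{a,b}^n\mathbf 1=\sum_{k=0}^n(-1)^k\binom{n}{k}a^{n-k}b^k$ (with $a^0=b^0=\mathbf 1$), and $\rho(a,b)=\limsup_{n\to\infty}\|C_{a,b}^n\mathbf 1\|^{1/n}$. *)

(* Defs.v *)
From Stdlib Require Import Reals.
Open Scope R_scope.

Record Cplx : Type := mkC { re : R ; im : R }.
Definition C0 : Cplx := mkC 0 0.
Definition C1 : Cplx := mkC 1 0.
Definition Cadd (z w : Cplx) : Cplx := mkC (re z + re w) (im z + im w).
Definition Cmul (z w : Cplx) : Cplx :=
  mkC (re z * re w - im z * im w) (re z * im w + im z * re w).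
Definition Cconj (z : Cplx) : Cplx := mkC (re z) (- im z).
Definition Cmod (z : Cplx) : R := sqrt (re z * re z + im z * im z).
Definition RtoC (r : R) : Cplx := mkC r 0.

Record CStarAlgebra : Type := {
  car :> Type;
  add : car -> car -> car;
  opp : car -> car;
  zero : car;
  mul : car -> car -> car;
  one : car;
  smul : Cplx -> car -> car;
  star : car -> car;
  norm : car -> R;
  addA : forall x y z, add x (add y z) = add (add x y) z;
  addC : forall x y, add x y = add y x;
  add0 : forall x, add zero x = x;
  addN : forall x, add (opp x) x = zero;
  smulA : forall c d x, smul c (smul d x) = smul (Cmul c d) x;
  smul1 : forall x, smul C1 x = x;
  smulDr : forall c x y, smul c (add x y) = add (smul c x) (smul c y);
  smulDl : forall c d x, smul (Cadd c d) x = add (smul c x) (smul d x);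
  mulA : forall x y z, mul x (mul y z) = mul (mul x y) z;
  mul1l : forall x, mul one x = x;
  mul1r : forall x, mul x one = x;
  mulDl : forall x y z, mul (add x y) z = add (mul x z) (mul y z);
  mulDr : forall x y z, mul x (add y z) = add (mul x y) (mul x z);
  smul_mull : forall c x y, smul c (mul x y) = mul (smul c x) y;
  smul_mulr : forall c x y, smul c (mul x y) = mul x (smul c y);
  starK : forall x, star (star x) = x;
  starD : forall x y, star (add x y) = add (star x) (star y);
  starZ : forall c x, star (smul c x) = smul (Cconj c) (star x);
  starM : forall x y, star (mul x y) = mul (star y) (star x);
  norm_ge0 : forall x, 0 <= norm x;
  norm_eq0 : forall x, norm x = 0 -> x = zero;
  norm_triangle : forall x y, norm (add x y) <= norm x + norm y;
  normZ : forall c x, norm (smul c x) = Cmod c * norm x;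
  norm_submul : forall x y, norm (mul x y) <= norm x * norm y;
  complete : forall u : nat -> car,
    (forall eps, 0 < eps -> exists N, forall m n, (N <= m)%nat -> (N <= n)%nat ->
        norm (add (u m) (opp (u n))) < eps) ->
    exists l, forall eps, 0 < eps -> exists N, forall n, (N <= n)%nat ->
        norm (add (u n) (opp l)) < eps;
  cstar_id : forall x, norm (mul (star x) x) = norm x * norm x
}.

Section Ops.
Variable A : CStarAlgebra.

Definition unitary (u : A) : Prop :=
  mul A (star A u) u = one A /\ mul A u (star A u) = one A.

Fixpoint powA (x : A) (n : nat) : A :=
  match n with O => one A | S m => mul A x (powA x m) end.

Fixpoint sumA (f : nat -> A) (n : nat) : A :=
  match n with O => f O | S m => add A (sumA f m) (f (S m)) end.

(** C_{a,b}^n 1 = sum_{k=0}^n (-1)^k binom(n,k) a^{n-k} b^k *)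
Definition Cab (a b : A) (n : nat) : A :=
  sumA (fun k => smul A (RtoC ((-1) ^ k * Binomial.C n k))
                       (mul A (powA a (n - k)) (powA b k))) n.
End Ops.

Definition nroot (x : R) (n : nat) : R :=
  if Req_EM_T x 0 then 0 else Rpower x (/ INR n).

Definition is_limsup (u : nat -> R) (l : R) : Prop :=
  (forall eps, 0 < eps -> exists N, forall n, (N <= n)%nat -> u n < l + eps) /\
  (forall eps, 0 < eps -> forall N, exists n, (N <= n)%nat /\ l - eps < u n).

Definition rho_is (A : CStarAlgebra) (a b : A) (l : R) : Prop :=
  is_limsup (fun n => nroot (norm A (Cab A a b n)) n) l.

(* Main.v *)
Require Import Defs.
From Stdlib Require Import Reals Lra Lia Psatz.
Open Scope R_scope.
Notation CC0 := Defs.C0.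
Notation CC1 := Defs.C1.

Lemma Ceq (z w : Cplx) : re z = re w -> im z = im w -> z = w.
Proof. destruct z, w; simpl; intros; subst; reflexivity. Qed.

Definition Copp (z : Cplx) : Cplx := mkC (- re z) (- im z).
Definition Csub (z w : Cplx) : Cplx := Cadd z (Copp w).

Lemma Cring : ring_theory CC0 CC1 Cadd Cmul Csub Copp (@eq Cplx).
Proof.
  constructor; intros; apply Ceq; destruct x; try destruct y; try destruct z;
  unfold Cadd, Cmul, Csub, Copp, CC0, CC1; simpl; ring.
Qed.
Add Ring Cring : Cring.

Fixpoint Cpow (z : Cplx) (n : nat) : Cplx :=
  match n with O => CC1 | S m => Cmul z (Cpow z m) end.

Lemma RtoC_add x y : RtoC (x + y) = Cadd (RtoC x) (RtoC y).
Proof. apply Ceq; simpl; ring. Qed.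
Lemma RtoC_mul x y : RtoC (x * y) = Cmul (RtoC x) (RtoC y).
Proof. apply Ceq; simpl; ring. Qed.
Lemma RtoC_opp x : RtoC (- x) = Copp (RtoC x).
Proof. apply Ceq; simpl; ring. Qed.

Lemma Cmod_ge0 z : 0 <= Cmod z.
Proof. apply sqrt_pos. Qed.
Lemma Cmod_mul z w : Cmod (Cmul z w) = Cmod z * Cmod w.
Proof.
  unfold Cmod; rewrite <- sqrt_mult by nra. f_equal. destruct z, w; simpl; ring.
Qed.
Lemma Cmod_RtoC x : Cmod (RtoC x) = Rabs x.
Proof. unfold Cmod; simpl. replace (x*x+0*0) with (x*x) by ring. apply sqrt_Rsqr_abs. Qed.
Lemma Cmod_pow z n : Cmod (Cpow z n) = Cmod z ^ n.
Proof.
  induction n; simpl. - rewrite <- (Rabs_R1). apply Cmod_RtoC.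
  - rewrite Cmod_mul, IHn. reflexivity.
Qed.
Lemma Cmod_sq z : Cmod z * Cmod z = re z * re z + im z * im z.
Proof. unfold Cmod; rewrite sqrt_sqrt; nra. Qed.

Lemma add0r {A : CStarAlgebra} (x : A) : add A x (zero A) = x.
Proof. rewrite addC. apply add0. Qed.
Lemma addNr {A : CStarAlgebra} (x : A) : add A x (opp A x) = zero A.
Proof. rewrite addC. apply addN. Qed.
Lemma add_cancel {A : CStarAlgebra} (x y z : A) : add A x y = add A x z -> y = z.
Proof.
  intro H. rewrite <- (add0 A y), <- (add0 A z), <- (addN A x), <- !addA, H. reflexivity.
Qed.
Lemma add_eq0 {A : CStarAlgebra} (x y : A) : add A x (opp A y) = zero A -> x = y.
Proof.
  intro H. apply (add_cancel (opp A y)). rewrite addN, addC. exact H.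
Qed.
Lemma smul0 {A : CStarAlgebra} (x : A) : smul A CC0 x = zero A.
Proof.
  apply (add_cancel (smul A CC0 x)). rewrite <- smulDl, add0r. f_equal. apply Ceq; simpl; ring.
Qed.
Lemma smul_zero {A : CStarAlgebra} c : smul A c (zero A) = zero A.
Proof.
  rewrite <- (smul0 (zero A)), smulA. replace (Cmul c CC0) with CC0 by ring. reflexivity.
Qed.
Lemma opp_smul {A : CStarAlgebra} (x : A) : opp A x = smul A (RtoC (-1)) x.
Proof.
  apply (add_cancel x). rewrite addNr.
  transitivity (add A (smul A CC1 x) (smul A (RtoC (-1)) x)).
  - rewrite <- smulDl, <- (smul0 x). f_equal. apply Ceq; simpl; ring.
  - rewrite smul1. reflexivity.
Qed.
Lemma smul_opp {A : CStarAlgebra} c (x : A) : smul A c (opp A x) = opp A (smul A c x).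
Proof. rewrite !opp_smul, !smulA. f_equal. ring. Qed.
Lemma opp_add {A : CStarAlgebra} (x y : A) : opp A (add A x y) = add A (opp A x) (opp A y).
Proof. rewrite !opp_smul. apply smulDr. Qed.
Lemma opp_opp {A : CStarAlgebra} (x : A) : opp A (opp A x) = x.
Proof. rewrite !opp_smul, smulA. rewrite <- (smul1 A x) at 2. f_equal. apply Ceq; simpl; ring. Qed.
Lemma smul_Cmul {A : CStarAlgebra} c d (x : A) : smul A (Cmul c d) x = smul A c (smul A d x).
Proof. rewrite smulA; reflexivity. Qed.
Lemma smul_Cadd {A : CStarAlgebra} c d (x : A) : smul A (Cadd c d) x = add A (smul A c x) (smul A d x).
Proof. apply smulDl. Qed.
Lemma smul_Csub {A : CStarAlgebra} c d (x : A) : smul A (Csub c d) x = add A (smul A c x) (opp A (smul A d x)).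
Proof. unfold Csub. rewrite smulDl, opp_smul, smulA. f_equal. f_equal. apply Ceq; simpl; ring. Qed.
Lemma mul0l {A : CStarAlgebra} (x : A) : mul A (zero A) x = zero A.
Proof.
  apply (add_cancel (mul A (zero A) x)). rewrite <- mulDl, add0, add0r. reflexivity.
Qed.
Lemma mul0r {A : CStarAlgebra} (x : A) : mul A x (zero A) = zero A.
Proof.
  apply (add_cancel (mul A x (zero A))). rewrite <- mulDr, add0, add0r. reflexivity.
Qed.
Lemma mul_oppl {A : CStarAlgebra} (x y : A) : mul A (opp A x) y = opp A (mul A x y).
Proof. rewrite !opp_smul, smul_mull. reflexivity. Qed.
Lemma mul_oppr {A : CStarAlgebra} (x y : A) : mul A x (opp A y) = opp A (mul A x y).
Proof. rewrite !opp_smul, smul_mulr. reflexivity. Qed.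
Lemma Cmod0 : Cmod CC0 = 0.
Proof. unfold Cmod; simpl. replace (0*0+0*0) with 0 by ring. apply sqrt_0. Qed.
Lemma norm_zero {A : CStarAlgebra} : norm A (zero A) = 0.
Proof. rewrite <- (smul0 (zero A)), normZ, Cmod0. ring. Qed.
Lemma norm_opp {A : CStarAlgebra} (x : A) : norm A (opp A x) = norm A x.
Proof. rewrite opp_smul, normZ, Cmod_RtoC. rewrite Rabs_left by lra. ring. Qed.
Lemma norm_sub {A : CStarAlgebra} (x y : A) : norm A x - norm A y <= norm A (add A x (opp A y)).
Proof.
  assert (H := norm_triangle A (add A x (opp A y)) y).
  rewrite <- addA, addN, add0r in H. lra.
Qed.
Lemma norm_sub' {A : CStarAlgebra} (x y : A) : norm A y - norm A x <= norm A (add A x (opp A y)).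
Proof.
  assert (H := norm_sub y x). replace (add A y (opp A x)) with (opp A (add A x (opp A y))) in H.
  - rewrite norm_opp in H. exact H.
  - rewrite opp_add, opp_opp, addC. reflexivity.
Qed.

Lemma sumA_ext {A : CStarAlgebra} (f g : nat -> A) n :
  (forall k, (k <= n)%nat -> f k = g k) -> sumA A f n = sumA A g n.
Proof.
  induction n; intro H; simpl. - apply H; lia.
  - rewrite IHn by (intros; apply H; lia). rewrite H by lia. reflexivity.
Qed.
Lemma sumA_add {A : CStarAlgebra} (f g : nat -> A) n :
  sumA A (fun k => add A (f k) (g k)) n = add A (sumA A f n) (sumA A g n).
Proof.
  induction n; simpl. - reflexivity.
  - rewrite IHn. rewrite <- !addA. f_equal. rewrite !addA. f_equal. apply addC.
Qed.
Lemma sumA_opp {A : CStarAlgebra} (f : nat -> A) n :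
  opp A (sumA A f n) = sumA A (fun k => opp A (f k)) n.
Proof. induction n; simpl. reflexivity. rewrite opp_add, IHn. reflexivity. Qed.
Lemma sumA_shift {A : CStarAlgebra} (f : nat -> A) n :
  sumA A f (S n) = add A (f 0%nat) (sumA A (fun k => f (S k)) n).
Proof.
  induction n. - reflexivity.
  - change (sumA A f (S (S n))) with (add A (sumA A f (S n)) (f (S (S n)))).
    rewrite IHn. simpl. rewrite addA. reflexivity.
Qed.
Lemma sumA_mull {A : CStarAlgebra} (x : A) f n :
  mul A x (sumA A f n) = sumA A (fun k => mul A x (f k)) n.
Proof. induction n; simpl. reflexivity. rewrite mulDr, IHn. reflexivity. Qed.
Lemma sumA_mulr {A : CStarAlgebra} (x : A) f n :
  mul A (sumA A f n) x = sumA A (fun k => mul A (f k) x) n.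
Proof. induction n; simpl. reflexivity. rewrite mulDl, IHn. reflexivity. Qed.
Lemma sumA_smul {A : CStarAlgebra} c (f : nat -> A) n :
  smul A c (sumA A f n) = sumA A (fun k => smul A c (f k)) n.
Proof. induction n; simpl. reflexivity. rewrite smulDr, IHn. reflexivity. Qed.
Lemma sumA_zero {A : CStarAlgebra} (f : nat -> A) n :
  (forall k, (k <= n)%nat -> f k = zero A) -> sumA A f n = zero A.
Proof.
  induction n; intro H; simpl. - apply H; lia.
  - rewrite IHn by (intros; apply H; lia). rewrite H by lia. apply add0.
Qed.
Lemma sumA_telescope {A : CStarAlgebra} (u : nat -> A) n :
  sumA A (fun k => add A (u k) (opp A (u (S k)))) n = add A (u 0%nat) (opp A (u (S n))).
Proof.
  induction n; simpl. reflexivity. rewrite IHn.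
  rewrite <- !addA. f_equal. rewrite addA, addN, add0. reflexivity.
Qed.
Lemma sumA_swap {A : CStarAlgebra} (F : nat -> nat -> A) m n :
  sumA A (fun j => sumA A (fun k => F j k) n) m = sumA A (fun k => sumA A (fun j => F j k) m) n.
Proof.
  induction m; simpl. reflexivity.
  rewrite IHm. rewrite <- sumA_add. reflexivity.
Qed.

Fixpoint Csum (f : nat -> Cplx) (n : nat) : Cplx :=
  match n with O => f O | S m => Cadd (Csum f m) (f (S m)) end.

Lemma sumA_smul_const {A : CStarAlgebra} (f : nat -> Cplx) (x : A) m :
  sumA A (fun j => smul A (f j) x) m = smul A (Csum f m) x.
Proof. induction m; simpl. reflexivity. rewrite IHm, smulDl. reflexivity. Qed.

Lemma norm_sumA_le {A : CStarAlgebra} (f : nat -> A) n B :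
  (forall k, (k <= n)%nat -> norm A (f k) <= B) -> norm A (sumA A f n) <= INR (S n) * B.
Proof.
  induction n; intro H.
  - simpl. rewrite Rmult_1_l. apply H; lia.
  - change (sumA A f (S n)) with (add A (sumA A f n) (f (S n))).
    eapply Rle_trans. apply norm_triangle.
    assert (H1 := IHn (fun k Hk => H k ltac:(lia))). assert (H2 := H (S n) ltac:(lia)).
    rewrite (S_INR (S n)). lra.
Qed.

Lemma powA_Sr {A : CStarAlgebra} (x : A) n : powA A x (S n) = mul A (powA A x n) x.
Proof.
  induction n. simpl. rewrite mul1l, mul1r. reflexivity.
  change (powA A x (S (S n))) with (mul A x (powA A x (S n))).
  rewrite IHn at 1. rewrite mulA. reflexivity.
Qed.

Lemma star_one {A : CStarAlgebra} : star A (one A) = one A.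
Proof.
  rewrite <- (mul1r A (star A (one A))).
  rewrite <- (starK A (mul A (star A (one A)) (one A))).
  rewrite starM, starK, mul1r. apply starK.
Qed.
Lemma norm_one {A : CStarAlgebra} : norm A (one A) <= 1.
Proof.
  assert (H := cstar_id A (one A)). rewrite star_one, mul1l in H.
  assert (H0 := norm_ge0 A (one A)). nra.
Qed.
Lemma norm_unitary {A : CStarAlgebra} (u : A) : unitary A u -> norm A u <= 1.
Proof.
  intros [H1 H2]. assert (H := cstar_id A u). rewrite H1 in H.
  assert (H0 := norm_ge0 A u). assert (H3 := @norm_one A). nra.
Qed.
Lemma unitary_star {A : CStarAlgebra} (u : A) : unitary A u -> unitary A (star A u).
Proof. intros [H1 H2]. split; rewrite starK; assumption. Qed.
Lemma norm_powA {A : CStarAlgebra} (u : A) n : unitary A u -> norm A (powA A u n) <= 1.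
Proof.
  intro Hu. induction n; simpl. apply norm_one.
  eapply Rle_trans. apply norm_submul.
  assert (H := norm_unitary u Hu). assert (H0 := norm_ge0 A u).
  assert (H1 := norm_ge0 A (powA A u n)). nra.
Qed.
Lemma norm_mul_le {A : CStarAlgebra} (u y : A) : norm A u <= 1 -> norm A (mul A u y) <= norm A y.
Proof.
  intro H. eapply Rle_trans. apply norm_submul.
  assert (H0 := norm_ge0 A u). assert (H1 := norm_ge0 A y). nra.
Qed.
Lemma norm_mul_le_r {A : CStarAlgebra} (u y : A) : norm A u <= 1 -> norm A (mul A y u) <= norm A y.
Proof.
  intro H. eapply Rle_trans. apply norm_submul.
  assert (H0 := norm_ge0 A u). assert (H1 := norm_ge0 A y). nra.
Qed.

Definition Tm {A : CStarAlgebra} (a b : A) (y : A) : A := mul A (mul A (star A a) y) b.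

Lemma norm_Tm {A : CStarAlgebra} (a b y : A) : unitary A a -> unitary A b ->
  norm A (Tm a b y) = norm A y.
Proof.
  intros Ha Hb. unfold Tm. apply Rle_antisym.
  - eapply Rle_trans. apply norm_mul_le_r. apply norm_unitary; exact Hb.
    apply norm_mul_le. apply norm_unitary, unitary_star; exact Ha.
  - assert (E : y = mul A (mul A a (mul A (mul A (star A a) y) b)) (star A b)).
    { destruct Ha as [Ha1 Ha2]; destruct Hb as [Hb1 Hb2].
      rewrite <- !mulA, Hb2, mul1r, !mulA, Ha2, mul1l. reflexivity. }
    rewrite E at 1. eapply Rle_trans. apply norm_mul_le_r. apply norm_unitary, unitary_star; exact Hb.
    apply norm_mul_le. apply norm_unitary; exact Ha.
Qed.
Lemma Tm_add {A : CStarAlgebra} (a b x y : A) : Tm a b (add A x y) = add A (Tm a b x) (Tm a b y).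
Proof. unfold Tm. rewrite mulDr, mulDl. reflexivity. Qed.
Lemma Tm_smul {A : CStarAlgebra} (a b x : A) c : Tm a b (smul A c x) = smul A c (Tm a b x).
Proof. unfold Tm. rewrite <- smul_mulr, <- smul_mull. reflexivity. Qed.
Lemma Tm_sum {A : CStarAlgebra} (a b : A) f n : Tm a b (sumA A f n) = sumA A (fun k => Tm a b (f k)) n.
Proof. unfold Tm. rewrite sumA_mull, sumA_mulr. reflexivity. Qed.

Lemma Cn0 n : Binomial.C n 0 = 1.
Proof. unfold Binomial.C. rewrite Nat.sub_0_r. simpl. field. apply INR_fact_neq_0. Qed.
Lemma Cnn n : Binomial.C n n = 1.
Proof. unfold Binomial.C. rewrite Nat.sub_diag. simpl. field. apply INR_fact_neq_0. Qed.

Definition cc (n k : nat) : R := if (k <=? n)%nat then (-1) ^ k * Binomial.C n k else 0.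

Lemma cc_pascal n k : cc (S n) k = cc n k - (match k with O => 0 | S j => cc n j end).
Proof.
  unfold cc. destruct k as [|j].
  - simpl. rewrite !Cn0. ring.
  - destruct (Nat.leb_spec (S j) (S n)); destruct (Nat.leb_spec (S j) n);
      destruct (Nat.leb_spec j n); try lia.
    + rewrite <- pascal by lia. simpl. ring.
    + assert (j = n) by lia. subst. rewrite !Cnn. simpl. ring.
    + ring.
Qed.

Definition FF {A : CStarAlgebra} (a b : A) n k := mul A (powA A a (n - k)) (powA A b k).

Lemma Cab_cc {A : CStarAlgebra} (a b : A) n :
  Cab A a b n = sumA A (fun k => smul A (RtoC (cc n k)) (FF a b n k)) n.
Proof.
  unfold Cab. apply sumA_ext. intros k Hk. unfold cc, FF.
  destruct (Nat.leb_spec k n); [reflexivity | lia].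
Qed.
Lemma Cab_cc' {A : CStarAlgebra} (a b : A) n :
  Cab A a b n = sumA A (fun k => smul A (RtoC (cc n k)) (FF a b n k)) (S n).
Proof.
  rewrite Cab_cc. 
  assert (H : cc n (S n) = 0) by (unfold cc; destruct (Nat.leb_spec (S n) n); [lia|reflexivity]).
  change (sumA A (fun k => smul A (RtoC (cc n k)) (FF a b n k)) (S n)) with
    (add A (sumA A (fun k => smul A (RtoC (cc n k)) (FF a b n k)) n) (smul A (RtoC (cc n (S n))) (FF a b n (S n)))).
  rewrite H. change (RtoC 0) with CC0. rewrite smul0, add0r. reflexivity.
Qed.

Lemma Cab_rec {A : CStarAlgebra} (a b : A) n :
  Cab A a b (S n) = add A (mul A a (Cab A a b n)) (opp A (mul A (Cab A a b n) b)).
Proof.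
  assert (E1 : mul A a (Cab A a b n) =
     sumA A (fun k => smul A (RtoC (cc n k)) (FF a b (S n) k)) (S n)).
  { rewrite Cab_cc', sumA_mull. apply sumA_ext. intros k Hk.
    rewrite <- smul_mulr. unfold cc, FF.
    destruct (Nat.leb_spec k n).
    - f_equal. rewrite mulA. f_equal. replace (S n - k)%nat with (S (n - k)) by lia. reflexivity.
    - replace (RtoC 0) with CC0 by reflexivity. rewrite !smul0. reflexivity. }
  assert (E2 : mul A (Cab A a b n) b =
     sumA A (fun k => smul A (RtoC (match k with O => 0 | S j => cc n j end)) (FF a b (S n) k)) (S n)).
  { rewrite sumA_shift.
    change (RtoC (match 0%nat with O => 0 | S j => cc n j end)) with CC0. rewrite smul0, add0.
    rewrite Cab_cc, sumA_mulr. apply sumA_ext. intros k Hk.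
    rewrite <- smul_mull. unfold FF. f_equal. rewrite <- mulA, <- powA_Sr. reflexivity. }
  rewrite E1, E2, sumA_opp, <- sumA_add, Cab_cc. apply sumA_ext. intros k Hk.
  rewrite cc_pascal. unfold Rminus. rewrite RtoC_add, RtoC_opp, smulDl.
  rewrite opp_smul, smulA. f_equal. f_equal. apply Ceq; simpl; ring.
Qed.

Definition L2 {A : CStarAlgebra} (x z : A) (al be : Cplx) : A := add A (smul A al x) (smul A be z).
Lemma L2_x {A : CStarAlgebra} (x z : A) al : smul A al x = L2 x z al CC0.
Proof. unfold L2. rewrite smul0, add0r. reflexivity. Qed.
Lemma L2_z {A : CStarAlgebra} (x z : A) be : smul A be z = L2 x z CC0 be.
Proof. unfold L2. rewrite smul0, add0. reflexivity. Qed.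
Lemma L2_add {A : CStarAlgebra} (x z : A) a1 b1 a2 b2 :
  add A (L2 x z a1 b1) (L2 x z a2 b2) = L2 x z (Cadd a1 a2) (Cadd b1 b2).
Proof.
  unfold L2. rewrite !smulDl. rewrite <- !addA. f_equal. rewrite !addA. f_equal. apply addC.
Qed.
Lemma L2_opp {A : CStarAlgebra} (x z : A) a1 b1 :
  opp A (L2 x z a1 b1) = L2 x z (Copp a1) (Copp b1).
Proof. unfold L2. rewrite opp_add, !opp_smul, !smulA. f_equal; f_equal; apply Ceq; simpl; ring. Qed.
Lemma L2_smul {A : CStarAlgebra} (x z : A) c a1 b1 :
  smul A c (L2 x z a1 b1) = L2 x z (Cmul c a1) (Cmul c b1).
Proof. unfold L2. rewrite smulDr, !smulA. reflexivity. Qed.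

Lemma E_point {A : CStarAlgebra} (a b : A) (c w : Cplx) (yk yk1 : A) :
  Tm a b yk = add A yk (opp A yk1) ->
  add A (smul A (Cadd w CC1) (smul A c yk)) (opp A (smul A w (Tm a b (smul A c yk)))) =
  add A (smul A c yk) (opp A (smul A (Copp (Cmul c w)) yk1)).
Proof.
  intro HT. rewrite Tm_smul, HT.
  replace (add A yk (opp A yk1)) with (L2 yk yk1 CC1 (RtoC (-1)))
    by (unfold L2; rewrite smul1, opp_smul; reflexivity).
  rewrite (L2_z yk yk1 (Copp (Cmul c w))).
  rewrite (L2_x yk yk1 c).
  rewrite !L2_smul, !L2_opp, !L2_add.
  f_equal; apply Ceq; simpl; ring.
Qed.

Definition sgn (k : nat) : Cplx := RtoC ((-1) ^ k).
Definition uu {A : CStarAlgebra} (y : nat -> A) (w : Cplx) (k : nat) : A :=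
  smul A (Cmul (sgn k) (Cpow w (S k))) (y k).
Definition Gs {A : CStarAlgebra} (y : nat -> A) (w : Cplx) (N : nat) : A := sumA A (uu y w) (S N).
Definition Ds {A : CStarAlgebra} (y : nat -> A) (w : Cplx) (N : nat) : A :=
  sumA A (fun k => smul A (Cmul (sgn (S k)) (Cpow w k)) (y (S k))) N.

Lemma sgnS k : sgn (S k) = Copp (sgn k).
Proof. apply Ceq; simpl; ring. Qed.
Lemma sgn0 : sgn 0 = CC1.
Proof. apply Ceq; simpl; ring. Qed.

Lemma G_D {A : CStarAlgebra} (y : nat -> A) w N :
  Gs y w N = add A (smul A w (y 0%nat)) (smul A (Cmul w w) (Ds y w N)).
Proof.
  unfold Gs, Ds. rewrite sumA_shift. f_equal.
  - unfold uu. f_equal. rewrite sgn0. simpl. ring.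
  - rewrite sumA_smul. apply sumA_ext. intros k _. unfold uu. rewrite smulA. f_equal.
    simpl. ring.
Qed.

Lemma E_id {A : CStarAlgebra} (a b : A) (y : nat -> A) w N :
  (forall k, Tm a b (y k) = add A (y k) (opp A (y (S k)))) ->
  add A (smul A (Cadd w CC1) (Gs y w N)) (opp A (smul A w (Tm a b (Gs y w N)))) =
  add A (uu y w 0%nat) (opp A (uu y w (S (S N)))).
Proof.
  intro hy. unfold Gs. rewrite Tm_sum, !sumA_smul, sumA_opp, <- sumA_add.
  rewrite <- sumA_telescope. apply sumA_ext. intros k _.
  unfold uu at 1 2. rewrite (E_point a b _ w (y k) (y (S k)) (hy k)).
  f_equal. f_equal. unfold uu. f_equal. rewrite sgnS. simpl. ring.
Qed.

Lemma norm_add_ge {A : CStarAlgebra} (x y : A) : norm A y - norm A x <= norm A (add A x y).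
Proof.
  assert (H := norm_triangle A (add A x y) (opp A x)).
  rewrite norm_opp in H. replace (add A (add A x y) (opp A x)) with y in H. lra.
  rewrite addC, addA, addN, add0. reflexivity.
Qed.
Lemma Cmod_sgn k : Cmod (sgn k) = 1.
Proof. unfold sgn. rewrite Cmod_RtoC, <- RPow_abs. replace (Rabs (-1)) with 1 by (rewrite Rabs_left; lra). apply pow1. Qed.

Lemma point_bound {A : CStarAlgebra} (a b : A) (y : nat -> A) (w : Cplx) (r : R) N :
  unitary A a -> unitary A b ->
  (forall k, Tm a b (y k) = add A (y k) (opp A (y (S k)))) ->
  1 <= r -> re w * re w + im w * im w = r * r ->
  norm A (y 0%nat) <= 1 -> r ^ (S (S N)) * norm A (y (S (S N))) <= 1 ->
  norm A (smul A (Cadd (Cadd (Cmul w w) w) (RtoC (r * r))) (Ds y w N)) <= 3 * (2 * r + 1).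
Proof.
  intros Ha Hb hy Hr Hw Hy0 HyN.
  assert (Hcw : Cmod w = r).
  { unfold Cmod. rewrite Hw. apply sqrt_square. lra. }
  set (g := norm A (Gs y w N)). set (d := norm A (Ds y w N)). set (n0 := norm A (y 0%nat)).
  set (s := Cmod (Cadd w CC1)).
  assert (Hg0 : 0 <= g) by apply norm_ge0. assert (Hd0 : 0 <= d) by apply norm_ge0.
  assert (Hn0 : 0 <= n0) by apply norm_ge0. assert (Hs0 : 0 <= s) by apply Cmod_ge0.
  assert (Hs2 : s * s = r * r + (2 * re w + 1)).
  { unfold s. rewrite Cmod_sq. simpl. nra. }
  set (EL := add A (smul A (Cadd w CC1) (Gs y w N)) (opp A (smul A w (Tm a b (Gs y w N))))).
  assert (H1 : norm A EL <= 2 * r).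
  { unfold EL. rewrite (E_id a b y w N hy). eapply Rle_trans. apply norm_triangle.
    rewrite norm_opp. unfold uu. rewrite !normZ, !Cmod_mul, !Cmod_sgn, !Cmod_pow, Hcw.
    assert (E : r ^ S (S (S N)) * norm A (y (S (S N))) = r * (r ^ (S (S N)) * norm A (y (S (S N))))) by (simpl; ring).
    rewrite !Rmult_1_l, E, pow_1. nra. }
  assert (H2 : s * g - r * g <= norm A EL).
  { unfold EL. eapply Rle_trans; [|apply norm_sub]. rewrite !normZ, norm_Tm by assumption.
    rewrite Hcw. fold g s. lra. }
  assert (H3 : r * g - s * g <= norm A EL).
  { unfold EL. eapply Rle_trans; [|apply norm_sub']. rewrite !normZ, norm_Tm by assumption.
    rewrite Hcw. fold g s. lra. }
  assert (H4 : r * r * d - r * n0 <= g).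
  { unfold g. rewrite G_D. eapply Rle_trans; [|apply norm_add_ge]. rewrite !normZ, Cmod_mul, Hcw.
    fold d n0. lra. }
  assert (Hp : Cadd (Cadd (Cmul w w) w) (RtoC (r * r)) = Cmul w (RtoC (2 * re w + 1))).
  { apply Ceq; simpl; nra. }
  rewrite Hp, normZ, Cmod_mul, Hcw, Cmod_RtoC. fold d.
  set (t := 2 * re w + 1).
  assert (Hre : re w * re w <= r * r) by nra.
  assert (Ht : Rabs t <= 2 * r + 1).
  { unfold t. apply Rabs_le. split; nra. }
  assert (Hsr : s <= r + 1). { assert (t <= Rabs t) by apply Rle_abs. destruct (Rle_dec s (r+1)); [assumption|]. assert (Hc : (r+1)*(r+1) < s * s) by (apply Rmult_le_0_lt_compat; lra). unfold t in *. lra. }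
  assert (Htg : Rabs t * g <= 2 * r * (2 * r + 1)).
  { assert (Ht2 : Rabs t = Rabs (s - r) * (s + r)).
    { replace t with ((s - r) * (s + r)) by (unfold t; nra). rewrite Rabs_mult.
      rewrite (Rabs_right (s + r)) by lra. reflexivity. }
    rewrite Ht2. assert (Hsg : Rabs (s - r) * g <= 2 * r).
    { destruct (Rle_dec r s). rewrite Rabs_right by lra. nra. rewrite Rabs_left1 by lra. nra. }
    assert (0 <= Rabs (s - r)) by apply Rabs_pos. nra. }
  assert (Hat : 0 <= Rabs t) by apply Rabs_pos.
  assert (Hmain : r * (r * Rabs t * d) <= r * (3 * (2 * r + 1))).
  { assert (Rabs t * (r * r * d) <= Rabs t * (g + r * n0)) by (apply Rmult_le_compat_l; lra).
    assert (Rabs t * n0 <= 2 * r + 1). { apply Rle_trans with (Rabs t * 1). apply Rmult_le_compat_l. exact Hat. exact Hy0. lra. }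
    assert (r * (Rabs t * n0) <= r * (2 * r + 1)) by (apply Rmult_le_compat_l; lra). nra. }
  apply Rmult_le_reg_l with r. lra. exact Hmain.
Qed.

Definition cis (t : R) : Cplx := mkC (cos t) (sin t).
Lemma cis_mul s t : Cmul (cis s) (cis t) = cis (s + t).
Proof. apply Ceq; simpl; rewrite ?cos_plus, ?sin_plus; ring. Qed.
Lemma cis_pow t m : Cpow (cis t) m = cis (INR m * t).
Proof.
  induction m. - apply Ceq; simpl; rewrite Rmult_0_l, ?cos_0, ?sin_0; reflexivity.
  - simpl Cpow. rewrite IHm, cis_mul. f_equal. rewrite S_INR. ring.
Qed.
Lemma Csum_ext f g n : (forall k, (k <= n)%nat -> f k = g k) -> Csum f n = Csum g n.
Proof.
  induction n; intro H; simpl. - apply H; lia.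
  - rewrite IHn by (intros; apply H; lia). rewrite H by lia. reflexivity.
Qed.
Lemma Csum_add f g n : Csum (fun k => Cadd (f k) (g k)) n = Cadd (Csum f n) (Csum g n).
Proof. induction n; simpl. reflexivity. rewrite IHn. ring. Qed.
Lemma Csum_mul c f n : Csum (fun k => Cmul c (f k)) n = Cmul c (Csum f n).
Proof. induction n; simpl. reflexivity. rewrite IHn. ring. Qed.
Lemma Csum_const c n : Csum (fun _ => c) n = Cmul (RtoC (INR (S n))) c.
Proof.
  induction n. - simpl. apply Ceq; simpl; ring.
  - simpl Csum. rewrite IHn. rewrite (S_INR (S n)). apply Ceq; simpl; ring.
Qed.

Lemma geom t K : Cmul (Csub (cis t) CC1) (Csum (fun j => cis (INR j * t)) K) =
                 Csub (cis (INR (S K) * t)) CC1.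
Proof.
  induction K.
  - simpl Csum. unfold cis. simpl INR. rewrite Rmult_0_l, Rmult_1_l, cos_0, sin_0.
    apply Ceq; simpl; ring.
  - cbn [Csum]. replace (Cmul (Csub (cis t) CC1) (Cadd (Csum (fun j => cis (INR j * t)) K) (cis (INR (S K) * t))))
      with (Cadd (Cmul (Csub (cis t) CC1) (Csum (fun j => cis (INR j * t)) K))
                 (Csub (Cmul (cis t) (cis (INR (S K) * t))) (cis (INR (S K) * t)))) by ring.
    rewrite IHK, cis_mul. replace (t + INR (S K) * t) with (INR (S (S K)) * t) by (rewrite (S_INR (S K)); ring).
    ring.
Qed.

Lemma Cmul_eq0 z s : Cmul z s = CC0 -> z <> CC0 -> s = CC0.
Proof.
  destruct z as [x y], s as [u v]. unfold Cmul; simpl. intros H Hz. injection H as H1 H2.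
  assert (Hn : x * x + y * y <> 0).
  { intro E. apply Hz. assert (x = 0) by nra. assert (y = 0) by nra. subst. reflexivity. }
  assert (Eu : (x * x + y * y) * u = 0).
  { replace ((x * x + y * y) * u) with (x * (x * u - y * v) + y * (x * v + y * u)) by ring.
    rewrite H1, H2. ring. }
  assert (Ev : (x * x + y * y) * v = 0).
  { replace ((x * x + y * y) * v) with (x * (x * v + y * u) - y * (x * u - y * v)) by ring.
    rewrite H1, H2. ring. }
  apply Rmult_integral in Eu. apply Rmult_integral in Ev.
  destruct Eu as [Eu|Eu]; [contradiction|]. destruct Ev as [Ev|Ev]; [contradiction|]. subst. reflexivity.
Qed.

Lemma cis_ne1 t : 0 < t < 2 * PI -> Csub (cis t) CC1 <> CC0.
Proof.
  intros Ht E. assert (Hs : sin t = 0) by (injection E; intros; lra).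
  assert (Hc : cos t = 1) by (injection E; intros; lra).
  destruct (sin_eq_0_0 t Hs) as [k Hk]. subst t.
  assert (Hpi := PI_RGT_0).
  assert (0 < IZR k) by (destruct Ht; nra). assert (IZR k < 2) by (destruct Ht; nra).
  apply lt_IZR in H. apply lt_IZR in H0. assert (k = 1%Z) by lia. subst.
  rewrite Rmult_1_l, cos_PI in Hc. lra.
Qed.

Definition theta (M : nat) : R := 2 * PI / INR M.

Lemma roots_sum (M m : nat) : (1 <= m < M)%nat ->
  Csum (fun j => cis (INR j * (INR m * theta M))) (M - 1) = CC0.
Proof.
  intros Hm. set (t := INR m * theta M).
  assert (HM : 0 < INR M) by (apply lt_0_INR; lia).
  assert (Hpi := PI_RGT_0).
  assert (Ht : 0 < t < 2 * PI).
  { unfold t, theta. assert (1 <= INR m) by (apply (le_INR 1); lia).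
    assert (INR m < INR M) by (apply lt_INR; lia). split.
    - apply Rmult_lt_0_compat. lra. apply Rdiv_lt_0_compat; lra.
    - replace (INR m * (2 * PI / INR M)) with (2 * PI * (INR m / INR M)) by (field; lra).
      rewrite <- (Rmult_1_r (2 * PI)) at 2. apply Rmult_lt_compat_l. lra.
      apply (Rmult_lt_reg_r (INR M)). lra. unfold Rdiv. rewrite Rmult_assoc, Rinv_l by lra. lra. }
  apply (Cmul_eq0 (Csub (cis t) CC1)); [|apply cis_ne1; exact Ht].
  rewrite geom. replace (S (M - 1)) with M by lia.
  replace (INR M * t) with (0 + 2 * INR m * PI) by (unfold t, theta; field; lra).
  unfold cis. rewrite cos_period, sin_period, cos_0, sin_0. apply Ceq; simpl; ring.
Qed.

Definition wpt (r : R) (M j : nat) : Cplx := Cmul (RtoC r) (cis (INR j * theta M)).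
Definition PS (r : R) (M m : nat) : Cplx := Csum (fun j => Cpow (wpt r M j) m) (M - 1).

Lemma Cpow_mul z1 z2 m : Cpow (Cmul z1 z2) m = Cmul (Cpow z1 m) (Cpow z2 m).
Proof. induction m; simpl. apply Ceq; simpl; ring. rewrite IHm. ring. Qed.
Lemma Cpow_RtoC x m : Cpow (RtoC x) m = RtoC (x ^ m).
Proof. induction m; simpl. reflexivity. rewrite IHm, RtoC_mul. reflexivity. Qed.

Lemma PS0 r M : (1 <= M)%nat -> PS r M 0 = RtoC (INR M).
Proof.
  intro HM. unfold PS. simpl Cpow. rewrite Csum_const. replace (S (M - 1)) with M by lia.
  apply Ceq; simpl; ring.
Qed.
Lemma PSm r M m : (1 <= m < M)%nat -> PS r M m = CC0.
Proof.
  intro Hm. unfold PS.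
  rewrite (Csum_ext _ (fun j => Cmul (RtoC (r ^ m)) (cis (INR j * (INR m * theta M))))).
  - rewrite Csum_mul, roots_sum by assumption. ring.
  - intros j _. unfold wpt. rewrite Cpow_mul, Cpow_RtoC, cis_pow. f_equal. f_equal. ring.
Qed.

Definition pp (r : R) (w : Cplx) : Cplx := Cadd (Cadd (Cmul w w) w) (RtoC (r * r)).

Lemma average {A : CStarAlgebra} (y : nat -> A) (r : R) N :
  sumA A (fun j => smul A (pp r (wpt r (N + 3) j)) (Ds y (wpt r (N + 3) j) N)) (N + 2) =
  smul A (RtoC (- (INR (N + 3) * (r * r)))) (y 1%nat).
Proof.
  set (M := (N + 3)%nat).
  replace (N + 2)%nat with (M - 1)%nat by (unfold M; lia).
  unfold Ds.
  rewrite (sumA_ext _ (fun j => sumA A (fun k => smul A (Cmul (pp r (wpt r M j))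
                 (Cmul (sgn (S k)) (Cpow (wpt r M j) k))) (y (S k))) N)).
  2: { intros j _. rewrite sumA_smul. apply sumA_ext. intros k _. rewrite smulA. reflexivity. }
  rewrite sumA_swap.
  rewrite (sumA_ext _ (fun k => smul A (Cmul (sgn (S k)) (Cadd (Cadd (PS r M (S (S k))) (PS r M (S k)))
                                    (Cmul (RtoC (r * r)) (PS r M k)))) (y (S k)))).
  2: { intros k _. rewrite sumA_smul_const. f_equal. unfold PS.
       rewrite <- Csum_mul, <- !Csum_add, <- Csum_mul. apply Csum_ext. intros j _.
       unfold pp. simpl Cpow. ring. }
  destruct N as [|N'].
  - simpl sumA. rewrite !PSm by (unfold M; lia). rewrite PS0 by (unfold M; lia).
    f_equal. apply Ceq; simpl; ring.
  - rewrite sumA_shift. rewrite sumA_zero.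
    + rewrite add0r. rewrite !PSm by (unfold M; lia). rewrite PS0 by (unfold M; lia).
      f_equal. apply Ceq; simpl; ring.
    + intros k Hk. rewrite !PSm by (unfold M; lia). replace (Cmul (sgn (S (S k))) _) with CC0 by ring.
      apply smul0.
Qed.

Lemma wpt_mod r M j : re (wpt r M j) * re (wpt r M j) + im (wpt r M j) * im (wpt r M j) = r * r.
Proof.
  unfold wpt, cis; simpl. assert (H := sin2_cos2 (INR j * theta M)). unfold Rsqr in H. nra.
Qed.

Lemma key_bound {A : CStarAlgebra} (a b : A) (y : nat -> A) (r : R) N :
  unitary A a -> unitary A b ->
  (forall k, Tm a b (y k) = add A (y k) (opp A (y (S k)))) ->
  1 <= r -> norm A (y 0%nat) <= 1 -> r ^ (S (S N)) * norm A (y (S (S N))) <= 1 ->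
  r * r * norm A (y 1%nat) <= 3 * (2 * r + 1).
Proof.
  intros Ha Hb hy Hr Hy0 HyN.
  assert (H := average y r N).
  assert (Hb2 : norm A (sumA A (fun j => smul A (pp r (wpt r (N + 3) j)) (Ds y (wpt r (N + 3) j) N)) (N + 2))
                <= INR (S (N + 2)) * (3 * (2 * r + 1))).
  { apply norm_sumA_le. intros j _. apply (point_bound a b); auto. apply wpt_mod. }
  rewrite H, normZ, Cmod_RtoC in Hb2. replace (S (N + 2)) with (N + 3)%nat in Hb2 by lia.
  assert (HM : 0 < INR (N + 3)) by (apply lt_0_INR; lia).
  rewrite Rabs_left1 in Hb2 by (assert (0 <= r * r) by nra; nra).
  rewrite Ropp_involutive in Hb2.
  apply Rmult_le_reg_l with (INR (N + 3)). lra. nra.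
Qed.

Lemma nroot_bound x n e : 0 <= x -> (1 <= n)%nat -> 0 < e -> nroot x n < e -> x <= e ^ n.
Proof.
  intros Hx Hn He. unfold nroot. destruct (Req_EM_T x 0) as [E|E].
  - intros _. subst. apply pow_le. lra.
  - intro H. assert (Hx' : 0 < x) by lra.
    assert (Eq : x = Rpower (Rpower x (/ INR n)) (INR n)).
    { rewrite Rpower_mult, Rinv_l. rewrite Rpower_1 by lra. reflexivity.
      apply not_0_INR. lia. }
    rewrite Eq, Rpower_pow by (unfold Rpower; apply exp_pos).
    apply pow_incr. split; [|lra]. unfold Rpower. left. apply exp_pos.
Qed.

Definition yy {A : CStarAlgebra} (a b : A) (n : nat) : A := mul A (powA A (star A a) n) (Cab A a b n).

Lemma Cab0 {A : CStarAlgebra} (a b : A) : Cab A a b 0 = one A.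
Proof.
  unfold Cab. cbn [sumA powA]. rewrite Cn0. replace (RtoC ((-1) ^ 0 * 1)) with CC1 by (apply Ceq; simpl; ring).
  rewrite smul1. apply mul1l.
Qed.

Lemma yy_rec {A : CStarAlgebra} (a b : A) n : unitary A a ->
  yy a b (S n) = add A (yy a b n) (opp A (Tm a b (yy a b n))).
Proof.
  intros [Ha1 Ha2]. unfold yy, Tm. rewrite Cab_rec, mulDr, mul_oppr. f_equal.
  - rewrite powA_Sr. rewrite <- mulA, (mulA A (star A a) a), Ha1, mul1l. reflexivity.
  - f_equal. simpl powA. rewrite !mulA. reflexivity.
Qed.

Lemma nroot_ge0 x n : 0 <= nroot x n.
Proof. unfold nroot. destruct (Req_EM_T x 0). lra. unfold Rpower. left. apply exp_pos. Qed.

Lemma Cab_aa {A : CStarAlgebra} (a : A) n : Cab A a a (S n) = zero A.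
Proof.
  induction n.
  - rewrite Cab_rec, Cab0, mul1l, mul1r. apply addNr.
  - rewrite Cab_rec, IHn, mul0r, mul0l. apply addNr.
Qed.

Theorem corollary3p2 (A : CStarAlgebra) (a b : A)
  (ha : unitary A a) (hb : unitary A b) :
  a = b <-> rho_is A a b 0.
Proof.
  split.
  - intros <-. split.
    + intros eps Heps. exists 1%nat. intros n Hn. destruct n as [|n]; [lia|].
      rewrite Cab_aa, norm_zero. unfold nroot. destruct (Req_EM_T 0 0); [lra|congruence].
    + intros eps Heps N. exists N. split; [lia|]. assert (H := nroot_ge0 (norm A (Cab A a a N)) N). lra.
  - intros [H1 _].
    set (y := yy a b).
    assert (hy : forall k, Tm a b (y k) = add A (y k) (opp A (y (S k)))).
    { intro k. unfold y. rewrite (yy_rec a b k ha). rewrite opp_add, opp_opp, addA, addNr, add0. reflexivity. }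
    assert (Hy0 : norm A (y 0%nat) <= 1).
    { unfold y, yy. simpl powA. rewrite Cab0, mul1l. apply norm_one. }
    assert (Hyn : forall n, norm A (y n) <= norm A (Cab A a b n)).
    { intro n. unfold y, yy. apply norm_mul_le. apply norm_powA, unitary_star, ha. }
    assert (Hbound : forall r, 1 <= r -> r * r * norm A (y 1%nat) <= 3 * (2 * r + 1)).
    { intros r Hr. destruct (H1 (/ r)) as [N0 HN0]. apply Rinv_0_lt_compat; lra.
      apply (key_bound a b y r N0 ha hb hy Hr Hy0).
      assert (Hc := HN0 (S (S N0)) ltac:(lia)). rewrite Rplus_0_l in Hc.
      apply nroot_bound in Hc; [| apply norm_ge0 | lia | apply Rinv_0_lt_compat; lra].
      assert (Hp : 0 < r ^ S (S N0)) by (apply pow_lt; lra).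
      apply Rle_trans with (r ^ S (S N0) * (/ r) ^ S (S N0)).
      - apply Rmult_le_compat_l. lra. eapply Rle_trans. apply Hyn. exact Hc.
      - rewrite <- Rpow_mult_distr, Rinv_r by lra. rewrite pow1. lra. }
    assert (Hz : norm A (y 1%nat) = 0).
    { assert (Hge := norm_ge0 A (y 1%nat)). destruct (Rle_lt_or_eq_dec _ _ Hge) as [Hlt|Heq]; [|lra].
      set (c := norm A (y 1%nat)) in *. exfalso.
      set (r := 9 / c + 1).
      assert (Hr : 1 <= r) by (unfold r; assert (0 < 9 / c) by (apply Rdiv_lt_0_compat; lra); lra).
      assert (Hb := Hbound r Hr).
      assert (Hrc : r * c = 9 + c) by (unfold r; field; lra).
      nra. }
    apply norm_eq0 in Hz.
    assert (Hy1 : y 1%nat = add A (one A) (opp A (mul A (star A a) b))).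
    { unfold y. rewrite (yy_rec a b 0 ha). fold y. unfold y, yy. simpl powA. rewrite Cab0, mul1l.
      unfold Tm. rewrite mul1r. reflexivity. }
    rewrite Hy1 in Hz. apply add_eq0 in Hz.
    destruct ha as [_ Ha2].
    rewrite <- (mul1r A a), Hz, mulA, Ha2, mul1l. reflexivity.
Qed.
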